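(* Let $\theta$ be a renormalised labelled tree (as defined below) such that $\Psi_{n_\ell}(\omega\cdot\nu_\ell)\neq0$ for every line $\ell$ of $\theta$ with $n_\ell\ge0$ (this holds in particular whenever the value of $\theta$ is non-zero). Then for every $n\ge0$, $$\mathfrak{N}_n(\theta)\le 2^{-(m_n-2)}K(\theta),$$ where $\mathfrak{N}_n(\theta)$ is the number of lines of $\theta$ with scale $\ge n$ and $K(\theta):=\sum_{v}|\nu_v|$, the sum running over all nodes of $\theta$.
   Context: Notation: $\omega\in\mathbb{R}^d$ satisfies the Bryuno condition; $\alpha_m(\omega):=\inf_{0<|\nu|\le2^m}|\omega\cdot\nu|$ with $|\nu|$ the $\ell^1$ norm; $m_0=0$, $m_{n+1}=m_n+p_n+1$ with $p_n:=\max\{q\ge0:\alpha_{m_n}(\omega)<2\alpha_{m_n+q}(\omega)\}$. $\chi$ is an even $C^\infty$ function, non-increasing in $|x|$, equal to $1$ for $|x|\le1/2$ and $0$ for $|x|\ge1$; $\chi_{-1}\equiv1$, $\chi_n(x)=\chi(4x/\alpha_{m_n}(\omega))$, $\psi_n=1-\chi_n$ ($n\ge0$), $\Psi_n=\chi_{n-1}\psi_n$ ($n\ge0$); thus $\Psi_n(x)\neq0$ implies $\alpha_{m_n}(\omega)/8<|x|<\alpha_{m_{n-1}}(\omega)/4$ (with $\alpha_{m_{-1}}:=+\infty$). Trees: a tree $\theta$ is a finite rooted tree whose root has exactly one incident line (the root line); all other vertices are nodes; lines are oriented toward the root, and each line $\ell=\ell_v$ is identified with the node $v$ it leaves. Write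 $w\preceq v$ if $v$ lies on the path from $w$ to the root. Each node $v$ carries a mode $\nu_v\in\mathbb{Z}^d$; each line $\ell_v$ carries the momentum $\nu_{\ell_v}=\sum_{w\preceq v}\nu_w$, required to be nonzero for all lines except possibly the root line; each line carries a scale $n_\ell$, with $n_\ell=-1$ if $\nu_\ell=0$ and $n_\ell\in\{0,1,2,\dots\}$ otherwise. A cluster on scale $n$ is a maximal connected subgraph (set of nodes together with the lines of $\theta$ joining them) all of whose lines have scale $\le n$ and at least one line of which has scale $n$; a line enters (exits) a subgraph $T$ if it connects a node outside $T$ to a node in $T$ (a node in $T$ to a node outside). A self-energy cluster is either a cluster with exactly one entering line $\ell'$ and one exiting line $\ell$ satisfying $\nu_\ell=\nu_{\ell'}$, or (scale $-1$) a single node $v$ with $\nu_v=0$ having exactly one entering line. A tree is renormalised if it contains no self-energy clusters. *)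

(* Defs.v *)
From Stdlib Require Import Reals Lra Lia ZArith Arith List Relations.
Import ListNotations.
Open Scope R_scope.

(** * Vectors in Z^d and R^d
    A vector of Z^d (resp. R^d) is a function nat -> Z (resp. nat -> R);
    only the components i < d are meaningful, all operations below
    only look at those components. *)
Definition zvec := nat -> Z.
Definition rvec := nat -> R.

Definition znorm1 (d : nat) (nu : zvec) : Z :=
  fold_right (fun i acc => (Z.abs (nu i) + acc)%Z) 0%Z (seq 0 d).

Definition dot (d : nat) (om : rvec) (nu : zvec) : R :=
  fold_right (fun i acc => om i * IZR (nu i) + acc) 0 (seq 0 d).

Definition zvec_eq (d : nat) (a b : zvec) : Prop := forall i, (i < d)%nat -> a i = b i.
Definition zvec_zero (d : nat) (a : zvec) : Prop := forall i, (i < d)%nat -> a i = 0%Z.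

Definition alpha_set (d : nat) (om : rvec) (m : nat) (x : R) : Prop :=
  exists nu : zvec, (0 < znorm1 d nu)%Z /\ (znorm1 d nu <= 2 ^ Z.of_nat m)%Z
                    /\ x = Rabs (dot d om nu).

Definition is_inf (E : R -> Prop) (x : R) : Prop :=
  (forall y, E y -> x <= y) /\ (forall z, (forall y, E y -> z <= y) -> z <= x).

Definition is_alpha (d : nat) (om : rvec) (alpha : nat -> R) : Prop :=
  forall m, is_inf (alpha_set d om m) (alpha m).

Definition bryuno (alpha : nat -> R) : Prop :=
  (forall m, 0 < alpha m) /\
  exists l, Un_cv (fun N => sum_f_R0 (fun m => (/ 2) ^ m * ln (/ alpha m)) N) l.

Definition is_p (alpha : nat -> R) (mn p : nat) : Prop :=
  alpha mn < 2 * alpha (mn + p)%nat /\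
  forall q, alpha mn < 2 * alpha (mn + q)%nat -> (q <= p)%nat.

Definition is_m_seq (alpha : nat -> R) (m : nat -> nat) : Prop :=
  m 0%nat = 0%nat /\
  forall n, exists p, is_p alpha (m n) p /\ m (S n) = (m n + p + 1)%nat.

Definition smooth (f : R -> R) : Prop :=
  exists D : nat -> R -> R, D 0%nat = f /\
    forall k x, derivable_pt_lim (D k) x (D (S k) x).

Definition is_cutoff (chi : R -> R) : Prop :=
  smooth chi /\
  (forall x, chi (- x) = chi x) /\
  (forall x y, Rabs x <= Rabs y -> chi y <= chi x) /\
  (forall x, Rabs x <= / 2 -> chi x = 1) /\
  (forall x, 1 <= Rabs x -> chi x = 0).

Definition chi_n (chi : R -> R) (alpha : nat -> R) (m : nat -> nat) (n : nat) (x : R) : R :=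
  chi (4 * x / alpha (m n)).

(* Psi_n = chi_{n-1} psi_n, with chi_{-1} = 1 and psi_n = 1 - chi_n *)
Definition Psi (chi : R -> R) (alpha : nat -> R) (m : nat -> nat) (n : nat) (x : R) : R :=
  match n with
  | O => 1 * (1 - chi_n chi alpha m 0 x)
  | S k => chi_n chi alpha m k x * (1 - chi_n chi alpha m (S k) x)
  end.

(** * Labelled trees
    Nodes are 0, ..., tN-1.  Node 0 is the node whose line is the root line;
    every other node v has a parent [tpar v = Some u] with u < v (every finite
    rooted tree admits such a numbering).  The line l_v leaving v is
    identified with v.  [tmode v] is nu_v, [tscale v] is the scale n_{l_v}. *)
Record tree := mkTree {
  tN : nat;
  tpar : nat -> option nat;
  tmode : nat -> zvec;
  tscale : nat -> Z
}.

Definition nodes (t : tree) : list nat := seq 0 (tN t).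

Definition tree_wf (t : tree) : Prop :=
  (1 <= tN t)%nat /\ tpar t 0%nat = None /\
  forall v, (0 < v < tN t)%nat -> exists u, tpar t v = Some u /\ (u < v)%nat.

(* below t w v : w ⪯ v, i.e. v lies on the path from w to the root *)
Fixpoint below_fuel (t : tree) (k w v : nat) : bool :=
  Nat.eqb w v ||
  match k with
  | O => false
  | S k' => match tpar t w with Some u => below_fuel t k' u v | None => false end
  end.
Definition below (t : tree) (w v : nat) : bool := below_fuel t (S w) w v.

Definition momentum (t : tree) (v : nat) : zvec :=
  fun i => fold_right (fun w acc => (tmode t w i + acc)%Z) 0%Z
             (filter (fun w => below t w v) (nodes t)).

Definition labelled_ok (d : nat) (t : tree) : Prop :=
  (forall v, (0 < v < tN t)%nat -> ~ zvec_zero d (momentum t v)) /\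
  (forall v, (v < tN t)%nat ->
     (zvec_zero d (momentum t v) -> tscale t v = (-1)%Z) /\
     (~ zvec_zero d (momentum t v) -> (0 <= tscale t v)%Z)).

Definition nodeset := nat -> Prop.

Definition in_tree (t : tree) (T : nodeset) : Prop := forall v, T v -> (v < tN t)%nat.

Definition internal_line (t : tree) (T : nodeset) (v : nat) : Prop :=
  (v < tN t)%nat /\ T v /\ exists u, tpar t v = Some u /\ T u.

Definition sub_edge (t : tree) (T : nodeset) (x y : nat) : Prop :=
  T x /\ T y /\ tpar t x = Some y.

Definition connected (t : tree) (T : nodeset) : Prop :=
  (exists v, T v) /\
  forall a b, T a -> T b -> clos_refl_sym_trans nat (sub_edge t T) a b.

Definition lines_le (t : tree) (n : Z) (T : nodeset) : Prop :=
  forall v, internal_line t T v -> (tscale t v <= n)%Z.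

Definition cluster (t : tree) (n : Z) (T : nodeset) : Prop :=
  in_tree t T /\ connected t T /\ lines_le t n T /\
  (forall T', in_tree t T' -> connected t T' -> lines_le t n T' ->
     (forall v, T v -> T' v) -> forall v, T' v -> T v) /\
  (exists v, internal_line t T v /\ tscale t v = n).

Definition entering (t : tree) (T : nodeset) (w : nat) : Prop :=
  (w < tN t)%nat /\ ~ T w /\ exists u, tpar t w = Some u /\ T u.
Definition exiting (t : tree) (T : nodeset) (v : nat) : Prop :=
  (v < tN t)%nat /\ T v /\ (tpar t v = None \/ exists u, tpar t v = Some u /\ ~ T u).

Definition self_energy (d : nat) (t : tree) (T : nodeset) : Prop :=
  (exists n, cluster t n T /\
     exists w v, entering t T w /\ (forall w', entering t T w' -> w' = w) /\
                 exiting t T v /\ (forall v', exiting t T v' -> v' = v) /\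
                 zvec_eq d (momentum t v) (momentum t w)) \/
  (exists v, (v < tN t)%nat /\ (forall x, T x <-> x = v) /\ zvec_zero d (tmode t v) /\
     exists w, entering t T w /\ (forall w', entering t T w' -> w' = w)).

Definition renormalised (d : nat) (t : tree) : Prop :=
  forall T : nodeset, ~ self_energy d t T.

Definition count_scale_ge (t : tree) (n : nat) : nat :=
  length (filter (fun v => Z.leb (Z.of_nat n) (tscale t v)) (nodes t)).

Definition Kval (d : nat) (t : tree) : Z :=
  fold_right (fun v acc => (znorm1 d (tmode t v) + acc)%Z) 0%Z (nodes t).

(* Main.v *)
Require Import Defs.
From Stdlib Require Import Reals ZArith Lra Lia List Classical Relations.
Import ListNotations.
Open Scope R_scope.

Lemma bf_step t (H: tree_wf t) : forall k w v, (w < tN t)%nat -> (w < k)%nat ->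
  below_fuel t k w v = below_fuel t (S k) w v.
Proof.
  destruct H as [H1 [H0 Hp]].
  induction k; intros w v Hw Hk; [lia|].
  cbn [below_fuel]. destruct (Nat.eqb w v); [reflexivity|]. simpl.
  destruct w as [|w'].
  - rewrite H0. reflexivity.
  - destruct (Hp (S w')) as [u [Hu Hlt]]; [lia|]. rewrite Hu.
    apply IHk; lia.
Qed.

Lemma bf_stable t (H: tree_wf t) w v : (w < tN t)%nat -> forall j,
  below_fuel t (S w + j) w v = below t w v.
Proof.
  intros Hw j. induction j.
  - rewrite Nat.add_0_r. reflexivity.
  - replace (S w + S j)%nat with (S (S w + j)) by lia.
    rewrite <- bf_step; auto; lia.
Qed.

Lemma below_spec t (H: tree_wf t) w v : (w < tN t)%nat ->
  below t w v = (Nat.eqb w v || match tpar t w with Some u => below t u v | None => false end)%bool.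
Proof.
  intros Hw. pose proof H as [H1 [H0 Hp]].
  unfold below at 1. cbn [below_fuel]. f_equal.
  destruct w as [|w'].
  - rewrite H0. reflexivity.
  - destruct (Hp (S w')) as [u [Hu Hlt]]; [lia|]. rewrite Hu.
    replace (S w') with (S u + (w' - u))%nat by lia.
    apply bf_stable; auto; lia.
Qed.

Lemma below_refl t w : below t w w = true.
Proof. unfold below. cbn [below_fuel]. rewrite Nat.eqb_refl. reflexivity. Qed.

Lemma below_parent t (H: tree_wf t) w u v : (w < tN t)%nat -> tpar t w = Some u ->
  below t u v = true -> below t w v = true.
Proof.
  intros Hw Hu Hb. rewrite below_spec; auto. rewrite Hu, Hb. apply Bool.orb_true_r.
Qed.

Lemma par_lt t (H: tree_wf t) w u : (w < tN t)%nat -> tpar t w = Some u -> (u < w)%nat.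
Proof.
  intros Hw Hu. destruct H as [H1 [H0 Hp]]. destruct w as [|w'].
  - congruence.
  - destruct (Hp (S w')) as [u' [Hu' Hlt]]; [lia|]. congruence.
Qed.

Lemma below_inv t (H: tree_wf t) w v : (w < tN t)%nat -> below t w v = true ->
  w = v \/ exists u, tpar t w = Some u /\ (u < w)%nat /\ below t u v = true.
Proof.
  intros Hw Hb. rewrite below_spec in Hb; auto.
  apply Bool.orb_true_iff in Hb. destruct Hb as [Hb|Hb].
  - left. apply Nat.eqb_eq; auto.
  - right. destruct (tpar t w) as [u|] eqn:Hu; [|discriminate].
    exists u. repeat split; auto. eapply par_lt; eauto.
Qed.

Lemma below_le t (H: tree_wf t) : forall w v, (w < tN t)%nat -> below t w v = true -> (v <= w)%nat.
Proof.
  intros w. induction w as [w IH] using lt_wf_ind. intros v Hw Hb.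
  destruct (below_inv t H w v Hw Hb) as [->|[u [Hu [Hlt Hb']]]]; [lia|].
  specialize (IH u Hlt v ltac:(lia) Hb'). lia.
Qed.

Lemma below_trans t (H: tree_wf t) : forall a b c, (a < tN t)%nat -> below t a b = true ->
  below t b c = true -> below t a c = true.
Proof.
  intros a. induction a as [a IH] using lt_wf_ind. intros b c Ha Hab Hbc.
  destruct (below_inv t H a b Ha Hab) as [->|[u [Hu [Hlt Hb']]]]; auto.
  eapply below_parent; eauto. eapply IH; eauto; lia.
Qed.

Lemma below_antisym t (H: tree_wf t) a b : (a < tN t)%nat -> below t a b = true ->
  below t b a = true -> a = b.
Proof.
  intros Ha Hab Hba. pose proof (below_le t H a b Ha Hab).
  pose proof (below_le t H b a ltac:(lia) Hba). lia.
Qed.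

Lemma below_chain t (H: tree_wf t) : forall w a b, (w < tN t)%nat -> below t w a = true ->
  below t w b = true -> below t a b = true \/ below t b a = true.
Proof.
  intros w. induction w as [w IH] using lt_wf_ind. intros a b Hw Ha Hb.
  destruct (below_inv t H w a Hw Ha) as [->|[u [Hu [Hlt Hu']]]]; auto.
  destruct (below_inv t H w b Hw Hb) as [->|[u2 [Hu2 [Hlt2 Hu2']]]]; auto.
  rewrite Hu in Hu2. injection Hu2 as <-. eapply IH; eauto; lia.
Qed.

Lemma below_root t (H: tree_wf t) : forall w, (w < tN t)%nat -> below t w 0 = true.
Proof.
  intros w. induction w as [w IH] using lt_wf_ind. intros Hw.
  destruct w as [|w']. apply below_refl.
  pose proof H as [H1 [H0 Hp]].
  destruct (Hp (S w')) as [u [Hu Hlt]]; [lia|].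
  eapply below_parent; eauto. apply IH; lia.
Qed.

Definition sumR (l : list nat) (f : nat -> R) : R := fold_right (fun x acc => f x + acc) 0 l.
Definition sumZ (l : list nat) (f : nat -> Z) : Z := fold_right (fun x acc => (f x + acc)%Z) 0%Z l.

Lemma sumR_ext l f g : (forall x, In x l -> f x = g x) -> sumR l f = sumR l g.
Proof. induction l; simpl; intros; auto. rewrite H, IHl; auto. Qed.
Lemma sumR_le l f g : (forall x, In x l -> f x <= g x) -> sumR l f <= sumR l g.
Proof. induction l; simpl; intros H; [lra|]. assert (f a <= g a) by (apply H; auto).
  assert (sumR l f <= sumR l g) by (apply IHl; intros; apply H; auto). lra. Qed.
Lemma sumR_plus l f g : sumR l (fun x => f x + g x) = sumR l f + sumR l g.
Proof. induction l; simpl; [lra|]. rewrite IHl. lra. Qed.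
Lemma sumR_scale l c f : sumR l (fun x => c * f x) = c * sumR l f.
Proof. induction l; simpl; [lra|]. rewrite IHl. lra. Qed.
Lemma sumR_zero l f : (forall x, In x l -> f x = 0) -> sumR l f = 0.
Proof. induction l; simpl; intros; auto. rewrite H, IHl; auto. lra. Qed.
Lemma sumR_nonneg l f : (forall x, In x l -> 0 <= f x) -> 0 <= sumR l f.
Proof. induction l; simpl; intros H; [lra|]. assert (0 <= f a) by (apply H; auto).
  assert (0 <= sumR l f) by (apply IHl; intros; apply H; auto). lra. Qed.
Lemma sumR_swap L M g : sumR L (fun u => sumR M (fun w => g u w)) = sumR M (fun w => sumR L (fun u => g u w)).
Proof.
  induction L; simpl.
  - symmetry. apply sumR_zero. auto.
  - rewrite IHL. rewrite <- sumR_plus. reflexivity.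
Qed.
Lemma sumR_one l : sumR l (fun _ => 1) = INR (length l).
Proof. induction l; simpl; [reflexivity|]. rewrite IHl. destruct (length l); simpl; lra. Qed.
Lemma sumR_unique (L : list nat) (p : nat -> bool) (c : R) : NoDup L ->
  (forall u1 u2, In u1 L -> In u2 L -> p u1 = true -> p u2 = true -> u1 = u2) ->
  sumR L (fun u => if p u then c else 0) = if existsb p L then c else 0.
Proof.
  induction L as [|a L IH]; simpl; intros Hnd Hu; [lra|].
  inversion Hnd; subst.
  rewrite IH; [|auto|intros; apply Hu; auto].
  destruct (p a) eqn:Ha; simpl.
  - destruct (existsb p L) eqn:He; [|lra].
    apply existsb_exists in He. destruct He as [x [Hx Hpx]].
    assert (x = a) by (apply Hu; auto). subst. contradiction.
  - lra.
Qed.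
Lemma sumR_filter l p : INR (length (filter p l)) = sumR l (fun x => if p x then 1 else 0).
Proof.
  induction l; simpl; auto. destruct (p a); simpl; rewrite <- IHl; [|lra].
  destruct (length (filter p l)); simpl; lra.
Qed.

Lemma sumZ_ext l f g : (forall x, In x l -> f x = g x) -> sumZ l f = sumZ l g.
Proof. induction l; simpl; intros; auto. rewrite H, IHl; auto. Qed.
Lemma sumZ_le l f g : (forall x, In x l -> (f x <= g x)%Z) -> (sumZ l f <= sumZ l g)%Z.
Proof. induction l; simpl; intros H; [lia|]. assert (f a <= g a)%Z by (apply H; auto).
  assert (sumZ l f <= sumZ l g)%Z by (apply IHl; intros; apply H; auto). lia. Qed.
Lemma sumZ_plus l f g : sumZ l (fun x => f x + g x)%Z = (sumZ l f + sumZ l g)%Z.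
Proof. induction l; simpl; [lia|]. rewrite IHl. lia. Qed.
Lemma sumZ_minus l f g : sumZ l (fun x => f x - g x)%Z = (sumZ l f - sumZ l g)%Z.
Proof. induction l; simpl; [lia|]. rewrite IHl. lia. Qed.
Lemma sumZ_zero l f : (forall x, In x l -> f x = 0%Z) -> sumZ l f = 0%Z.
Proof. induction l; simpl; intros; auto. rewrite H, IHl; auto. Qed.
Lemma sumZ_swap L M g : sumZ L (fun u => sumZ M (fun w => g u w)) = sumZ M (fun w => sumZ L (fun u => g u w)).
Proof.
  induction L; simpl.
  - symmetry. apply sumZ_zero. auto.
  - rewrite IHL. rewrite <- sumZ_plus. reflexivity.
Qed.
Lemma sumZ_abs l f : (Z.abs (sumZ l f) <= sumZ l (fun x => Z.abs (f x)))%Z.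
Proof. induction l; simpl; [lia|]. lia. Qed.
Lemma sumZ_IZR l f : IZR (sumZ l f) = sumR l (fun x => IZR (f x)).
Proof. induction l; simpl; auto. rewrite plus_IZR, IHl. reflexivity. Qed.
Lemma sumZ_filter l p f : fold_right (fun w acc => (f w + acc)%Z) 0%Z (filter p l)
   = sumZ l (fun w => if p w then f w else 0%Z).
Proof. induction l; simpl; auto. destruct (p a); simpl; rewrite IHl; lia. Qed.
Lemma sumZ_in l f i : (forall y, In y l -> (0 <= f y)%Z) -> In i l -> (f i <= sumZ l f)%Z.
Proof.
  induction l; simpl; intros Hp Hi; [contradiction|].
  assert (0 <= sumZ l f)%Z.
  { clear IHl Hi. induction l; simpl; [lia|].
    assert (0 <= f a0)%Z by (apply Hp; simpl; auto).
    assert (0 <= sumZ l f)%Z. { apply IHl. intros; apply Hp; simpl in *; tauto. } lia. }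
  destruct Hi as [->|Hi].
  - lia.
  - assert (0 <= f a)%Z by auto. assert (f i <= sumZ l f)%Z by auto. lia.
Qed.
Lemma sumZ_single l v f p : NoDup l -> In v l -> (forall w, In w l -> p w = true <-> w = v) ->
  sumZ l (fun w => if p w then f w else 0%Z) = f v.
Proof.
  induction l as [|a l IH]; simpl; intros Hnd Hv Hp; [contradiction|].
  inversion Hnd; subst.
  destruct Hv as [->|Hv].
  - assert (p v = true) by (apply Hp; auto). rewrite H.
    rewrite sumZ_zero; [lia|]. intros x Hx.
    destruct (p x) eqn:E; auto. apply Hp in E; [subst; contradiction| auto].
  - assert (p a = false). { destruct (p a) eqn:E; auto. apply Hp in E; auto. subst; contradiction. }
    rewrite H. rewrite IH; auto.
Qed.

Lemma znorm_sumZ d x : znorm1 d x = sumZ (seq 0 d) (fun i => Z.abs (x i)).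
Proof. reflexivity. Qed.

Lemma znorm_nonneg d x : (0 <= znorm1 d x)%Z.
Proof. rewrite znorm_sumZ. generalize (seq 0 d). induction l; simpl; lia. Qed.

Lemma znorm_comp d x i : (i < d)%nat -> (Z.abs (x i) <= znorm1 d x)%Z.
Proof.
  intros Hi. rewrite znorm_sumZ. apply (sumZ_in (seq 0 d) (fun j => Z.abs (x j)) i).
  intros; lia. apply in_seq. lia.
Qed.

Lemma znorm_tri d l (p : nat -> bool) (x : nat -> zvec) :
  (znorm1 d (fun i => sumZ l (fun w => if p w then x w i else 0%Z))
   <= sumZ l (fun w => if p w then znorm1 d (x w) else 0%Z))%Z.
Proof.
  rewrite znorm_sumZ.
  eapply Z.le_trans. apply sumZ_le. intros i _. apply sumZ_abs.
  rewrite sumZ_swap. apply sumZ_le. intros w _. destruct (p w).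
  - rewrite znorm_sumZ. lia.
  - rewrite sumZ_zero; auto. lia.
Qed.

Lemma alpha_anti d om alpha m1 m2 : is_alpha d om alpha -> (m1 <= m2)%nat -> alpha m2 <= alpha m1.
Proof.
  intros Ha Hle. destruct (Ha m1) as [_ Hglb]. apply Hglb.
  intros y [nu [H1 [H2 H3]]]. destruct (Ha m2) as [Hlb _]. apply Hlb.
  exists nu. split; [auto|split; [|auto]]. eapply Z.le_trans; [exact H2|].
  apply Z.pow_le_mono_r; lia.
Qed.

Lemma big_norm d om alpha M nu : is_alpha d om alpha -> (0 < znorm1 d nu)%Z ->
  Rabs (dot d om nu) < alpha M -> 2 ^ M < IZR (znorm1 d nu).
Proof.
  intros Ha Hpos Hd.
  destruct (Z_lt_le_dec (2 ^ Z.of_nat M) (znorm1 d nu)) as [Hl|Hl].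
  - rewrite pow_IZR. apply IZR_lt. auto.
  - exfalso. destruct (Ha M) as [Hlb _].
    assert (alpha M <= Rabs (dot d om nu)) by (apply Hlb; exists nu; auto). lra.
Qed.

Lemma m_mono alpha m : is_m_seq alpha m -> forall k1 k2, (k1 <= k2)%nat -> (m k1 <= m k2)%nat.
Proof.
  intros [H0 Hs] k1 k2 Hle. induction Hle; [lia|].
  destruct (Hs m0) as [p [_ Hp]]. lia.
Qed.

Lemma psi_bound chi alpha m k x : is_cutoff chi -> (forall j, 0 < alpha j) ->
  Psi chi alpha m (S k) x <> 0 -> Rabs x < alpha (m k) / 4.
Proof.
  intros [_ [_ [_ [_ Hz]]]] Hpos HP. simpl in HP. unfold chi_n in HP.
  assert (Ha : 0 < alpha (m k)) by apply Hpos.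
  destruct (Rlt_le_dec (Rabs x) (alpha (m k)/4)) as [|Hge]; auto. exfalso.
  assert (H1 : 1 <= Rabs (4 * x / alpha (m k))).
  { replace (4 * x / alpha (m k)) with (x * (4 / alpha (m k))) by (field; lra).
    rewrite Rabs_mult. rewrite (Rabs_right (4 / alpha (m k))).
    2:{ apply Rle_ge. unfold Rdiv. apply Rmult_le_pos; [lra| left; apply Rinv_0_lt_compat; lra]. }
    apply Rle_trans with (alpha (m k)/4 * (4/alpha (m k))).
    - right; field; lra.
    - apply Rmult_le_compat_r; [ unfold Rdiv; apply Rmult_le_pos; [lra| left; apply Rinv_0_lt_compat; lra] | lra]. }
  rewrite (Hz _ H1) in HP. apply HP. ring.
Qed.

Lemma dot_minus d om (a b : zvec) : dot d om (fun i => (a i - b i)%Z) = dot d om a - dot d om b.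
Proof.
  unfold dot. induction (seq 0 d); simpl; [lra|]. rewrite IHl, minus_IZR. ring.
Qed.

Definition En (m : nat -> nat) (n : nat) : R := 2 ^ (m n) / 2.

Lemma En_pos m n : 0 < En m n.
Proof. unfold En. assert (0 < 2 ^ m n) by (apply pow_lt; lra). lra. Qed.

Lemma En_succ alpha m n0 : is_m_seq alpha m ->
  exists p, alpha (m n0) < 2 * alpha (m n0 + p)%nat /\ En m (S n0) = 2 ^ (m n0 + p).
Proof.
  intros [H0 Hs]. destruct (Hs n0) as [p [[Hp _] Hmp]]. exists p. split; auto.
  unfold En. rewrite Hmp. replace (m n0 + p + 1)%nat with (S (m n0 + p)) by lia.
  change (2 ^ S (m n0 + p)) with (2 * 2 ^ (m n0 + p)). field.
Qed.

Lemma En_zero alpha m : is_m_seq alpha m -> En m 0 = / 2.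
Proof. intros [H0 _]. unfold En. rewrite H0. simpl. field. Qed.

Lemma big_from_dot d om alpha m n0 nu : is_alpha d om alpha -> is_m_seq alpha m ->
  (0 < znorm1 d nu)%Z -> Rabs (dot d om nu) < alpha (m n0) / 2 -> En m (S n0) < IZR (znorm1 d nu).
Proof.
  intros Ha Hm Hpos Hd. destruct (En_succ alpha m n0 Hm) as [p [Hp ->]].
  apply (big_norm d om alpha); auto. lra.
Qed.

Definition Sb t n w := Z.leb (Z.of_nat n) (tscale t w).
Definition strictb t a b := (below t a b && negb (Nat.eqb a b))%bool.
Definition nob t n u v := forallb (fun x => negb (Sb t n x && strictb t u x && strictb t x v)%bool) (nodes t).
Definition tops t n v := filter (fun u => Sb t n u && strictb t u v && nob t n u v)%bool (nodes t).
Definition Nc t n v := sumR (nodes t) (fun w => if (below t w v && Sb t n w)%bool then 1 else 0).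
Definition aw d t w := IZR (znorm1 d (tmode t w)).
Definition Kc d t v := sumR (nodes t) (fun w => if below t w v then aw d t w else 0).

Lemma in_nodes t w : In w (nodes t) <-> (w < tN t)%nat.
Proof. unfold nodes. rewrite in_seq. lia. Qed.

Lemma nodes_nodup t : NoDup (nodes t).
Proof. apply seq_NoDup. Qed.

Lemma tops_nodup t n v : NoDup (tops t n v).
Proof. apply NoDup_filter, nodes_nodup. Qed.

Lemma tops_prop t n v u : In u (tops t n v) ->
  (u < tN t)%nat /\ Sb t n u = true /\ below t u v = true /\ u <> v /\ nob t n u v = true.
Proof.
  unfold tops. rewrite filter_In, in_nodes. intros [Hu Hc].
  apply andb_prop in Hc as [Hc Hn]. apply andb_prop in Hc as [HS Hs].
  unfold strictb in Hs. apply andb_prop in Hs as [Hb Hne].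
  apply Bool.negb_true_iff, Nat.eqb_neq in Hne. auto.
Qed.

Lemma forallb_false {A} (f : A -> bool) l : forallb f l = false -> exists y, In y l /\ f y = false.
Proof.
  induction l; simpl; [discriminate|]. destruct (f a) eqn:E; simpl; intros H.
  - destruct (IHl H) as [y [Hy Hf]]. eauto.
  - eauto.
Qed.

Lemma tops_exists t n (H: tree_wf t) v : forall x, (x < tN t)%nat -> Sb t n x = true ->
  below t x v = true -> x <> v -> exists u, In u (tops t n v) /\ below t x u = true.
Proof.
  intros x. induction x as [x IH] using lt_wf_ind. intros Hx HS Hb Hne.
  destruct (nob t n x v) eqn:Hn.
  - exists x. split; [|apply below_refl]. apply filter_In. split; [apply in_nodes; auto|].
    unfold strictb. rewrite HS, Hb, Hn. simpl.
    destruct (Nat.eqb x v) eqn:E; [apply Nat.eqb_eq in E; contradiction|reflexivity].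
  - apply forallb_false in Hn. destruct Hn as [y [Hy Hf]].
    apply Bool.negb_false_iff in Hf. apply andb_prop in Hf as [Hf Hyv].
    apply andb_prop in Hf as [HSy Hxy]. unfold strictb in *.
    apply andb_prop in Hxy as [Hxy Hxy']. apply andb_prop in Hyv as [Hyv Hyv'].
    apply Bool.negb_true_iff, Nat.eqb_neq in Hxy'. apply Bool.negb_true_iff, Nat.eqb_neq in Hyv'.
    pose proof (below_le t H x y Hx Hxy).
    destruct (IH y ltac:(lia) ltac:(lia) HSy Hyv Hyv') as [u [Hu Hyu]].
    exists u. split; auto. eapply below_trans; eauto.
Qed.

Lemma tops_nested t n (H: tree_wf t) v u1 u2 : In u1 (tops t n v) -> In u2 (tops t n v) ->
  below t u1 u2 = true -> u1 = u2.
Proof.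
  intros H1 H2 Hb. destruct (Nat.eq_dec u1 u2) as [|Hne]; auto. exfalso.
  destruct (tops_prop t n v u1 H1) as [Hu1 [HS1 [Hb1 [Hne1 Hn1]]]].
  destruct (tops_prop t n v u2 H2) as [Hu2 [HS2 [Hb2 [Hne2 Hn2]]]].
  unfold nob in Hn1. rewrite forallb_forall in Hn1.
  specialize (Hn1 u2 ltac:(apply in_nodes; auto)).
  unfold strictb in Hn1. rewrite HS2, Hb, Hb2 in Hn1.
  apply Nat.eqb_neq in Hne, Hne2. rewrite Hne, Hne2 in Hn1. discriminate.
Qed.

Lemma tops_unique t n (H: tree_wf t) v w u1 u2 : (w < tN t)%nat -> In u1 (tops t n v) -> In u2 (tops t n v) ->
  below t w u1 = true -> below t w u2 = true -> u1 = u2.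
Proof.
  intros Hw H1 H2 Hb1 Hb2.
  destruct (below_chain t H w u1 u2 Hw Hb1 Hb2) as [Hc|Hc].
  - eapply tops_nested; eauto.
  - symmetry. eapply tops_nested; eauto.
Qed.

Lemma Nc_decomp t n (H: tree_wf t) v : (v < tN t)%nat ->
  Nc t n v = (if Sb t n v then 1 else 0) + sumR (tops t n v) (fun u => Nc t n u).
Proof.
  intros Hv. unfold Nc at 1.
  rewrite (sumR_ext _ _ (fun w => (if Nat.eqb w v then (if Sb t n v then 1 else 0) else 0)
       + sumR (tops t n v) (fun u => if (below t w u && Sb t n w)%bool then 1 else 0))).
  2:{ intros w Hw. apply in_nodes in Hw.
      rewrite (sumR_unique _ (fun u => below t w u && Sb t n w)%bool).
      2: apply tops_nodup.
      2:{ intros u1 u2 Hu1 Hu2 Hp1 Hp2. apply andb_prop in Hp1 as [Hp1 _].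
          apply andb_prop in Hp2 as [Hp2 _]. eapply tops_unique; eauto. }
      destruct (Nat.eqb w v) eqn:Ewv.
      - apply Nat.eqb_eq in Ewv. subst w. rewrite below_refl. simpl.
        destruct (existsb _ _) eqn:Ex.
        + exfalso. apply existsb_exists in Ex. destruct Ex as [u [Hu Hp]].
          apply andb_prop in Hp as [Hp _]. destruct (tops_prop t n v u Hu) as [Hu' [_ [Hb [Hne _]]]].
          apply Hne. symmetry. apply (below_antisym t H v u); auto.
        + lra.
      - apply Nat.eqb_neq in Ewv.
        replace (existsb (fun u => (below t w u && Sb t n w)%bool) (tops t n v))
          with (below t w v && Sb t n w)%bool; [lra|].
        destruct (below t w v && Sb t n w)%bool eqn:E1; destruct (existsb _ _) eqn:E2; auto.
        + exfalso. apply andb_prop in E1 as [E1 E1'].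
          destruct (tops_exists t n H v w Hw E1' E1 Ewv) as [u [Hu Hwu]].
          assert (existsb (fun u => (below t w u && Sb t n w)%bool) (tops t n v) = true).
          { apply existsb_exists. exists u. rewrite Hwu, E1'. auto. }
          congruence.
        + exfalso. apply existsb_exists in E2. destruct E2 as [u [Hu Hp]].
          apply andb_prop in Hp as [Hp Hp']. destruct (tops_prop t n v u Hu) as [_ [_ [Hb _]]].
          rewrite (below_trans t H w u v Hw Hp Hb), Hp' in E1. discriminate. }
  rewrite sumR_plus. f_equal.
  - rewrite (sumR_unique _ (fun w => Nat.eqb w v)).
    + replace (existsb (fun w => Nat.eqb w v) (nodes t)) with true; auto.
      symmetry. apply existsb_exists. exists v. rewrite Nat.eqb_refl. split; auto. apply in_nodes; auto.
    + apply nodes_nodup.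
    + intros u1 u2 _ _ E1 E2. apply Nat.eqb_eq in E1, E2. congruence.
  - rewrite sumR_swap. reflexivity.
Qed.

Lemma aw_nonneg d t w : 0 <= aw d t w.
Proof. unfold aw. apply IZR_le. apply znorm_nonneg. Qed.

Lemma Kc_decomp d t n (H: tree_wf t) v : (v < tN t)%nat ->
  sumR (tops t n v) (fun u => Kc d t u) <= Kc d t v.
Proof.
  intros Hv. unfold Kc. rewrite sumR_swap. apply sumR_le. intros w Hw. apply in_nodes in Hw.
  rewrite (sumR_unique _ (fun u => below t w u)).
  2: apply tops_nodup.
  2:{ intros u1 u2 Hu1 Hu2 Hp1 Hp2. eapply tops_unique; eauto. }
  destruct (existsb _ _) eqn:Ex.
  - apply existsb_exists in Ex. destruct Ex as [u [Hu Hp]].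
    destruct (tops_prop t n v u Hu) as [_ [_ [Hb _]]].
    rewrite (below_trans t H w u v Hw Hp Hb). lra.
  - destruct (below t w v); pose proof (aw_nonneg d t w); lra.
Qed.

Lemma Kc_region d t (H: tree_wf t) u v : (u < tN t)%nat -> below t u v = true ->
  Kc d t v = Kc d t u + sumR (nodes t) (fun w => if (below t w v && negb (below t w u))%bool then aw d t w else 0).
Proof.
  intros Hu Huv. unfold Kc. rewrite <- sumR_plus. apply sumR_ext. intros w Hw. apply in_nodes in Hw.
  destruct (below t w u) eqn:E1.
  - rewrite (below_trans t H w u v Hw E1 Huv). simpl. lra.
  - destruct (below t w v); simpl; lra.
Qed.

Lemma znorm_ext d x y : (forall i, x i = y i) -> znorm1 d x = znorm1 d y.
Proof. intros E. rewrite !znorm_sumZ. apply sumZ_ext. intros; rewrite E; auto. Qed.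

Lemma mom_sum t v i : momentum t v i = sumZ (nodes t) (fun w => if below t w v then tmode t w i else 0%Z).
Proof. unfold momentum. apply sumZ_filter. Qed.

Lemma mom_diff t (H: tree_wf t) u v i : (u < tN t)%nat -> below t u v = true ->
  (momentum t v i - momentum t u i)%Z =
  sumZ (nodes t) (fun w => if (below t w v && negb (below t w u))%bool then tmode t w i else 0%Z).
Proof.
  intros Hu Huv. rewrite !mom_sum, <- sumZ_minus. apply sumZ_ext. intros w Hw. apply in_nodes in Hw.
  destruct (below t w u) eqn:E1.
  - rewrite (below_trans t H w u v Hw E1 Huv). simpl. lia.
  - destruct (below t w v); simpl; lia.
Qed.

Lemma sum_tri d t (p : nat -> bool) (x : zvec) :
  (forall i, x i = sumZ (nodes t) (fun w => if p w then tmode t w i else 0%Z)) ->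
  IZR (znorm1 d x) <= sumR (nodes t) (fun w => if p w then aw d t w else 0).
Proof.
  intros Hx. rewrite (znorm_ext d x _ Hx).
  eapply Rle_trans. apply IZR_le. apply (znorm_tri d (nodes t) p (fun w => tmode t w)).
  rewrite sumZ_IZR. right. apply sumR_ext. intros w _. destruct (p w); reflexivity.
Qed.

Lemma Kc_mom d t v : IZR (znorm1 d (momentum t v)) <= Kc d t v.
Proof. apply sum_tri. intros i. apply mom_sum. Qed.

Lemma region_mom d t (H: tree_wf t) u v : (u < tN t)%nat -> below t u v = true ->
  IZR (znorm1 d (fun i => momentum t v i - momentum t u i)%Z) <=
  sumR (nodes t) (fun w => if (below t w v && negb (below t w u))%bool then aw d t w else 0).
Proof. intros Hu Huv. apply sum_tri. intros i. apply mom_diff; auto. Qed.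

Lemma max_exists (P : nat -> Prop) (f : nat -> Z) : forall N, (exists x, (x < N)%nat /\ P x) ->
  exists x0, P x0 /\ (x0 < N)%nat /\ forall x, (x < N)%nat -> P x -> (f x <= f x0)%Z.
Proof.
  induction N; intros [x [Hx Px]]; [lia|].
  destruct (classic (exists x, (x < N)%nat /\ P x)) as [Hex|Hnex].
  - destruct (IHN Hex) as [x0 [P0 [Hx0 Hmax]]].
    destruct (classic (P N)) as [PN|PN].
    + destruct (Z_le_gt_dec (f N) (f x0)).
      * exists x0. repeat split; auto. intros y Hy Py.
        destruct (Nat.eq_dec y N); [subst; auto|apply Hmax; auto; lia].
      * exists N. repeat split; auto. intros y Hy Py.
        destruct (Nat.eq_dec y N); [subst; lia|]. specialize (Hmax y ltac:(lia) Py). lia.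
    + exists x0. repeat split; auto. intros y Hy Py.
      destruct (Nat.eq_dec y N); [subst; contradiction|apply Hmax; auto; lia].
  - assert (x = N). { destruct (Nat.eq_dec x N); auto. exfalso. apply Hnex. exists x. split; auto. lia. }
    subst. exists N. repeat split; auto. intros y Hy Py.
    destruct (Nat.eq_dec y N); [subst; lia|]. exfalso; apply Hnex; exists y; split; auto; lia.
Qed.

Lemma no_se d t n (H: tree_wf t) (Hr: renormalised d t) v u :
  (v < tN t)%nat -> Sb t n v = true -> tops t n v = [u] ->
  (forall i, (i < d)%nat -> momentum t v i = momentum t u i) -> False.
Proof.
  intros Hv HSv Htops Heq.
  assert (Hu : In u (tops t n v)) by (rewrite Htops; simpl; auto).
  destruct (tops_prop t n v u Hu) as [Hut [HSu [Huv [Hne _]]]].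
  pose proof H as [H1 [H0 Hp]].
  set (T := fun x => (x < tN t)%nat /\ below t x v = true /\ below t x u = false).
  assert (Tv : T v).
  { split; auto. split; [apply below_refl|]. destruct (below t v u) eqn:E; auto.
    exfalso. apply Hne. apply (below_antisym t H u v); auto. }
  assert (Tpar : forall x, T x -> x <> v -> exists p, tpar t x = Some p /\ T p /\ (p < x)%nat).
  { intros x [Hx [Hxv Hxu]] Hxne.
    destruct (below_inv t H x v Hx Hxv) as [|[p [Hpx [Hlt Hpv]]]]; [contradiction|].
    exists p. split; auto. split; [|auto]. split; [lia|]. split; auto.
    destruct (below t p u) eqn:E; auto. rewrite (below_parent t H x p u Hx Hpx E) in Hxu. discriminate. }
  assert (TnoS : forall x, T x -> x <> v -> Sb t n x = false).
  { intros x [Hx [Hxv Hxu]] Hxne. destruct (Sb t n x) eqn:E; auto.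
    destruct (tops_exists t n H v x Hx E Hxv Hxne) as [u' [Hu' Hxu']].
    rewrite Htops in Hu'. destruct Hu' as [<-|[]]. congruence. }
  assert (vpar : forall p, tpar t v = Some p -> ~ T p).
  { intros p Hpv [Hp' [Hpb _]]. pose proof (par_lt t H v p Hv Hpv).
    pose proof (below_le t H p v Hp' Hpb). lia. }
  assert (exit_only : forall x, exiting t T x -> x = v).
  { intros x [Hx [Tx Hex]]. destruct (Nat.eq_dec x v) as [|Hxne]; auto.
    destruct (Tpar x Tx Hxne) as [p [Hpx [Tp _]]].
    destruct Hex as [Hn|[p' [Hp'x Hnt]]]; [congruence|].
    rewrite Hpx in Hp'x. injection Hp'x as <-. contradiction. }
  assert (exit_v : exiting t T v).
  { split; auto. split; auto. destruct (tpar t v) as [p|] eqn:E;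
      [right; exists p; split; auto; apply vpar; auto | left; auto]. }
  assert (enter_only : forall w, entering t T w -> w = u).
  { intros w [Hw [nTw [p [Hpw Tp]]]]. destruct Tp as [Hp' [Hpv Hpu]].
    assert (Hwv : below t w v = true) by (eapply below_parent; eauto).
    assert (Hwu : below t w u = true).
    { destruct (below t w u) eqn:E; auto. exfalso; apply nTw; split; auto. }
    destruct (below_inv t H w u Hw Hwu) as [|[p' [Hp'w [_ Hp'u]]]]; auto.
    rewrite Hpw in Hp'w. injection Hp'w as <-. congruence. }
  assert (enter_u : entering t T u).
  { split; auto. split. { intros [_ [_ E]]. rewrite below_refl in E. discriminate. }
    destruct (below_inv t H u v Hut Huv) as [|[p [Hpu [Hlt Hpv]]]]; [contradiction|].
    exists p. split; auto. split; [lia|]. split; auto.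
    destruct (below t p u) eqn:E; auto. pose proof (below_le t H p u ltac:(lia) E). lia. }
  assert (HSv' : (Z.of_nat n <= tscale t v)%Z) by (apply Z.leb_le; auto).
  assert (HSu' : (Z.of_nat n <= tscale t u)%Z) by (apply Z.leb_le; auto).
  apply (Hr T).
  destruct (classic (exists x, internal_line t T x)) as [Hex|Hnex].
  - left.
    destruct (max_exists (internal_line t T) (tscale t) (tN t)) as [x0 [IL0 [_ Hmax]]].
    { destruct Hex as [x Hx]. exists x. split; auto. destruct Hx; auto. }
    assert (Hx0v : x0 <> v).
    { intros ->. destruct IL0 as [_ [_ [p [Hpv Tp]]]]. eapply vpar; eauto. }
    assert (Hn' : (tscale t x0 < Z.of_nat n)%Z).
    { pose proof (TnoS x0 (proj1 (proj2 IL0)) Hx0v) as E. unfold Sb in E. apply Z.leb_gt in E. auto. }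
    assert (conn : forall a, T a -> clos_refl_sym_trans nat (sub_edge t T) a v).
    { intros a. induction a as [a IH] using lt_wf_ind. intros Ta.
      destruct (Nat.eq_dec a v) as [->|Hane]; [apply rst_refl|].
      destruct (Tpar a Ta Hane) as [p [Hpa [Tp Hlt]]].
      apply rst_trans with p; [apply rst_step; split; [auto|split; auto]| apply IH; auto]. }
    exists (tscale t x0). split.
    + split; [intros x Tx; apply Tx|].
      split.
      * split; [exists v; auto|]. intros a b Ta Tb.
        eapply rst_trans; [apply conn; auto| apply rst_sym; apply conn; auto].
      * split. { intros x Hx. apply Hmax; auto. destruct Hx; auto. }
        split. 2:{ exists x0; auto. }
        intros T' HT' HcT' HlT' Hsub y Ty.
        assert (edge : forall a b, sub_edge t T' a b -> (T a <-> T b)).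
        { intros a b [T'a [T'b Hab]]. pose proof (HT' a T'a) as Ha. split.
          - intro Ta. destruct (classic (T b)) as [|nTb]; auto. exfalso.
            assert (a = v) by (apply exit_only; split; [auto|split; [auto|right; exists b; auto]]).
            subst a. assert (Hil : internal_line t T' v) by (split; [auto|split; [auto|exists b; auto]]).
            specialize (HlT' v Hil). lia.
          - intro Tb. destruct (classic (T a)) as [|nTa]; auto. exfalso.
            assert (a = u) by (apply enter_only; split; [auto|split; [auto|exists b; auto]]).
            subst a. assert (Hil : internal_line t T' u) by (split; [auto|split; [auto|exists b; auto]]).
            specialize (HlT' u Hil). lia. }
        assert (pres : forall a b, clos_refl_sym_trans nat (sub_edge t T') a b -> (T a <-> T b)).
        { intros a b Hab. induction Hab as [a b Hab|a|a b Hab IH|a b c Hab IHab Hbc IHbc].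
          - apply edge; auto.
          - tauto.
          - tauto.
          - tauto. }
        destruct HcT' as [_ Hc]. assert (T' v) by (apply Hsub; auto).
        apply (pres v y); auto.
    + exists u, v. split; [auto|]. split; [auto|]. split; [auto|]. split; [auto|].
      intros i Hi. apply Heq; auto.
  - right. exists v. split; auto.
    assert (Tiff : forall x, T x <-> x = v).
    { intros x; split; [|intros ->; auto].
      intros Tx; destruct (Nat.eq_dec x v) as [|Hxne]; auto; exfalso.
      destruct (Tpar x Tx Hxne) as [p [Hpx [Tp _]]]. apply Hnex. exists x.
      split; [apply Tx|split; auto; exists p; auto]. }
    split; [auto|]. split.
    + intros i Hi. pose proof (mom_diff t H u v i Hut Huv) as E.
      rewrite (Heq i Hi), Z.sub_diag in E.
      rewrite (sumZ_single (nodes t) v (fun w => tmode t w i)) in E; auto.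
      * apply nodes_nodup.
      * apply in_nodes; auto.
      * intros w Hw. apply in_nodes in Hw. rewrite <- Tiff. unfold T. split.
        -- intros E'. apply andb_prop in E' as [E1 E2]. apply Bool.negb_true_iff in E2. auto.
        -- intros [_ [E1 E2]]. rewrite E1, E2. auto.
    + exists u. split; auto.
Qed.

Definition HPsi d om alpha m chi t := forall v, (v < tN t)%nat -> (0 <= tscale t v)%Z ->
     Psi chi alpha m (Z.to_nat (tscale t v)) (dot d om (momentum t v)) <> 0.

Lemma dot_bound d om alpha m chi t n0 v : is_alpha d om alpha -> (forall j, 0 < alpha j) ->
  is_m_seq alpha m -> is_cutoff chi -> HPsi d om alpha m chi t -> (v < tN t)%nat ->
  Sb t (S n0) v = true -> Rabs (dot d om (momentum t v)) < alpha (m n0) / 4.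
Proof.
  intros Ha Hpos Hm Hc HP Hv HS. unfold Sb in HS. apply Z.leb_le in HS.
  specialize (HP v Hv ltac:(lia)).
  replace (Z.to_nat (tscale t v)) with (S (Z.to_nat (tscale t v) - 1)) in HP by lia.
  apply psi_bound in HP; auto.
  eapply Rlt_le_trans; [exact HP|].
  assert (alpha (m (Z.to_nat (tscale t v) - 1)%nat) <= alpha (m n0)).
  { apply (alpha_anti d om); auto. apply (m_mono alpha m Hm). lia. }
  lra.
Qed.

Lemma mom_nonzero d t n v : labelled_ok d t -> (v < tN t)%nat -> Sb t n v = true ->
  exists i, (i < d)%nat /\ momentum t v i <> 0%Z.
Proof.
  intros [_ Hl] Hv HS. unfold Sb in HS. apply Z.leb_le in HS.
  destruct (classic (exists i, (i < d)%nat /\ momentum t v i <> 0%Z)) as [|Hn]; auto.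
  exfalso. assert (Hz0 : zvec_zero d (momentum t v)).
  { intros i Hi. destruct (Z.eq_dec (momentum t v i) 0); auto. exfalso; apply Hn; eauto. }
  destruct (Hl v Hv) as [Hz _]. specialize (Hz Hz0). lia.
Qed.

Lemma znorm_ge1 d x i : (i < d)%nat -> x i <> 0%Z -> (1 <= znorm1 d x)%Z.
Proof. intros Hi Hx. pose proof (znorm_comp d x i Hi). lia. Qed.

Lemma node_big d om alpha m chi t n v : is_alpha d om alpha -> (forall j, 0 < alpha j) ->
  is_m_seq alpha m -> is_cutoff chi -> labelled_ok d t -> HPsi d om alpha m chi t ->
  (v < tN t)%nat -> Sb t n v = true -> En m n < IZR (znorm1 d (momentum t v)).
Proof.
  intros Ha Hpos Hm Hc Hl HP Hv HS.
  destruct (mom_nonzero d t n v Hl Hv HS) as [i [Hi Hne]].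
  pose proof (znorm_ge1 _ _ _ Hi Hne) as H1.
  destruct n as [|n0].
  - rewrite (En_zero alpha m Hm). apply IZR_le in H1. lra.
  - apply (big_from_dot d om alpha); auto; [lia|].
    pose proof (dot_bound d om alpha m chi t n0 v Ha Hpos Hm Hc HP Hv HS). pose proof (Hpos (m n0)). lra.
Qed.

Lemma diff_big d om alpha m chi t n v u i0 : is_alpha d om alpha -> (forall j, 0 < alpha j) ->
  is_m_seq alpha m -> is_cutoff chi -> HPsi d om alpha m chi t ->
  (v < tN t)%nat -> (u < tN t)%nat -> Sb t n v = true -> Sb t n u = true ->
  (i0 < d)%nat -> momentum t v i0 <> momentum t u i0 ->
  En m n <= IZR (znorm1 d (fun i => momentum t v i - momentum t u i)%Z).
Proof.
  intros Ha Hpos Hm Hc HP Hv Hu HSv HSu Hi0 Hne.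
  assert (H1 : (1 <= znorm1 d (fun i => momentum t v i - momentum t u i))%Z).
  { apply (znorm_ge1 d _ i0); auto. lia. }
  destruct n as [|n0].
  - rewrite (En_zero alpha m Hm). apply IZR_le in H1. lra.
  - left. apply (big_from_dot d om alpha); auto; [lia|].
    rewrite dot_minus.
    pose proof (dot_bound d om alpha m chi t n0 v Ha Hpos Hm Hc HP Hv HSv).
    pose proof (dot_bound d om alpha m chi t n0 u Ha Hpos Hm Hc HP Hu HSu).
    pose proof (Rabs_triang (dot d om (momentum t v)) (- dot d om (momentum t u))) as Ht.
    rewrite Rabs_Ropp in Ht. unfold Rminus. lra.
Qed.

Lemma main_claim d om alpha m chi t n : is_alpha d om alpha -> (forall j, 0 < alpha j) ->
  is_m_seq alpha m -> is_cutoff chi -> tree_wf t -> labelled_ok d t -> renormalised d t ->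
  HPsi d om alpha m chi t ->
  forall k v, (v < tN t)%nat -> (tN t - v <= k)%nat -> Sb t n v = true ->
  En m n * (Nc t n v + 1) <= 2 * Kc d t v.
Proof.
  intros Ha Hpos Hm Hc H Hl Hr HP. induction k; intros v Hv Hk HS; [lia|].
  assert (IHt : forall u, In u (tops t n v) -> En m n * (Nc t n u + 1) <= 2 * Kc d t u).
  { intros u Hu. destruct (tops_prop t n v u Hu) as [Hut [HSu [Huv [Hne _]]]].
    pose proof (below_le t H u v Hut Huv). apply IHk; auto; lia. }
  pose proof (Nc_decomp t n H v Hv) as ND. rewrite HS in ND.
  pose proof (Kc_decomp d t n H v Hv) as KD.
  pose proof (En_pos m n) as HE.
  assert (Hsum : En m n * (sumR (tops t n v) (fun u => Nc t n u) + INR (length (tops t n v))) <= 2 * Kc d t v).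
  { rewrite <- sumR_one, <- sumR_plus, <- sumR_scale.
    eapply Rle_trans. apply sumR_le. intros u Hu. apply IHt; auto.
    rewrite (sumR_scale _ 2 (fun u => Kc d t u)). lra. }
  destruct (tops t n v) as [|u [|u2 rest]] eqn:Etops.
  - simpl in ND. rewrite ND.
    pose proof (node_big d om alpha m chi t n v Ha Hpos Hm Hc Hl HP Hv HS).
    pose proof (Kc_mom d t v). lra.
  - simpl in ND.
    assert (Hu : In u (tops t n v)) by (rewrite Etops; simpl; auto).
    destruct (tops_prop t n v u Hu) as [Hut [HSu [Huv [Hne _]]]].
    specialize (IHt u (or_introl eq_refl)).
    rewrite (Kc_region d t H u v Hut Huv).
    assert (Hreg : En m n <= sumR (nodes t) (fun w => if (below t w v && negb (below t w u))%bool then aw d t w else 0)).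
    { destruct (classic (forall i, (i < d)%nat -> momentum t v i = momentum t u i)) as [Heq|Hneq].
      - exfalso. apply (no_se d t n H Hr v u Hv HS Etops Heq).
      - apply not_all_ex_not in Hneq. destruct Hneq as [i0 Hi0].
        apply imply_to_and in Hi0. destruct Hi0 as [Hi0 Hne0].
        eapply Rle_trans; [apply (diff_big d om alpha m chi t n v u i0); auto| apply region_mom; auto]. }
    rewrite ND. lra.
  - simpl length in Hsum. rewrite !S_INR in Hsum.
    pose proof (pos_INR (length rest)).
    set (X := sumR (u :: u2 :: rest) (fun u0 => Nc t n u0)) in *.
    assert (En m n * (X + 2) <= En m n * (X + (INR (length rest) + 1 + 1))) by (apply Rmult_le_compat_l; lra).
    rewrite ND. lra.
Qed.

Theorem lemma3p4 (d : nat) (om : rvec) (alpha : nat -> R) (m : nat -> nat)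
  (chi : R -> R) (t : tree) :
  is_alpha d om alpha -> bryuno alpha -> is_m_seq alpha m -> is_cutoff chi ->
  tree_wf t -> labelled_ok d t -> renormalised d t ->
  (forall v, (v < tN t)%nat -> (0 <= tscale t v)%Z ->
     Psi chi alpha m (Z.to_nat (tscale t v)) (dot d om (momentum t v)) <> 0) ->
  forall n : nat,
    INR (count_scale_ge t n) <=
    powerRZ 2 (- (Z.of_nat (m n) - 2)) * IZR (Kval d t).
Proof.
  intros Ha Hb Hm Hc H Hl Hr HP n.
  assert (Hpos : forall j, 0 < alpha j) by apply Hb.
  pose proof (En_pos m n) as HE.
  pose proof H as [H1 _].
  assert (Key : En m n * Nc t n 0 <= 2 * Kc d t 0).
  { destruct (Sb t n 0) eqn:HS0.
    - pose proof (main_claim d om alpha m chi t n Ha Hpos Hm Hc H Hl Hr HP (tN t) 0 ltac:(lia) ltac:(lia) HS0).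
      lra.
    - rewrite (Nc_decomp t n H 0 ltac:(lia)), HS0.
      pose proof (Kc_decomp d t n H 0 ltac:(lia)) as KD.
      assert (HS : sumR (tops t n 0) (fun u => En m n * (Nc t n u + 1)) <= sumR (tops t n 0) (fun u => 2 * Kc d t u)).
      { apply sumR_le. intros u Hu. destruct (tops_prop t n 0 u Hu) as [Hut [HSu _]].
        apply (main_claim d om alpha m chi t n Ha Hpos Hm Hc H Hl Hr HP (tN t)); auto; lia. }
      rewrite (sumR_scale _ 2 (fun u => Kc d t u)) in HS.
      rewrite (sumR_scale _ (En m n) (fun u => Nc t n u + 1)) in HS.
      rewrite sumR_plus, sumR_one in HS.
      pose proof (pos_INR (length (tops t n 0))).
      assert (0 <= En m n * INR (length (tops t n 0))) by (apply Rmult_le_pos; lra).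
      change (fun u => Nc t n u) with (Nc t n).
      rewrite Rmult_plus_distr_l in HS. lra. }
  assert (HN : INR (count_scale_ge t n) = Nc t n 0).
  { unfold count_scale_ge. rewrite sumR_filter. unfold Nc. apply sumR_ext.
    intros w Hw. apply in_nodes in Hw. rewrite (below_root t H w Hw). reflexivity. }
  assert (HK : IZR (Kval d t) = Kc d t 0).
  { change (Kval d t) with (sumZ (nodes t) (fun v => znorm1 d (tmode t v))).
    rewrite sumZ_IZR. unfold Kc. apply sumR_ext.
    intros w Hw. apply in_nodes in Hw. rewrite (below_root t H w Hw). reflexivity. }
  rewrite HN, HK.
  assert (HP2 : 0 < 2 ^ m n) by (apply pow_lt; lra).
  assert (Hc4 : powerRZ 2 (- (Z.of_nat (m n) - 2)) * 2 ^ m n = 4).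
  { rewrite pow_powerRZ, <- powerRZ_add by lra.
    replace (- (Z.of_nat (m n) - 2) + Z.of_nat (m n))%Z with 2%Z by lia. simpl. ring. }
  unfold En in Key.
  apply Rmult_le_reg_r with (2 ^ m n); auto.
  replace (powerRZ 2 (- (Z.of_nat (m n) - 2)) * Kc d t 0 * 2 ^ m n)
    with (4 * Kc d t 0) by (rewrite <- Hc4; ring).
  assert (Nc t n 0 * 2 ^ m n = 2 * (2 ^ m n / 2 * Nc t n 0)) by field.
  lra.
Qed.
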